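(* Let $x\in\mathbb{R}\setminus\mathbb{Q}$. Then $\gamma_R(x)=\tau_R(2x)$, where for an irrational $y$ \[\tau_R(y)=\sup\Big\{\tau : |y-\tfrac{p}{q}|<q^{-\tau} \text{ for infinitely many irreducible rationals } \tfrac{p}{q} \text{ with } p,q \text{ not both odd}\Big\},\] \[\gamma_R(y)=\sup\Big\{\gamma : |y-\tfrac{p}{q}|<q^{-\gamma} \text{ for infinitely many irreducible rationals } \tfrac{p}{q} \text{ with } q\equiv0,1,3 \pmod 4\Big\}.\]
   Context: Irreducible rationals $p/q$ are written with $q\ge1$ and $\gcd(p,q)=1$. *)

(* Defs.v *)
From HB Require Import structures.
From mathcomp Require Import all_boot all_order all_algebra.
From mathcomp Require Import all_classical all_reals all_analysis.
Set Implicit Arguments. Unset Strict Implicit. Unset Printing Implicit Defensive.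
Import Order.TTheory GRing.Theory Num.Theory.
Local Open Scope ring_scope.
Local Open Scope classical_set_scope.

Definition approx_set (R : realType) (P : int -> nat -> bool) (y t : R)
  : set (int * nat) :=
  [set pq | (0 < pq.2)%N /\ coprime `|pq.1|%N pq.2 /\ P pq.1 pq.2 /\
            `|y - pq.1%:~R / pq.2%:R| < (pq.2%:R : R) `^ (- t)].

Definition approx_exponent (R : realType) (P : int -> nat -> bool) (y : R)
  : \bar R :=
  ereal_sup [set t%:E | t in [set t : R | infinite_set (approx_set P y t)]].

Definition tauR_cond (p : int) (q : nat) : bool := ~~ (odd `|p|%N && odd q).
Definition gammaR_cond (p : int) (q : nat) : bool := (q %% 4 != 2)%N.

Definition tau_R (R : realType) (y : R) : \bar R := approx_exponent tauR_cond y.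
Definition gamma_R (R : realType) (y : R) : \bar R := approx_exponent gammaR_cond y.

(* Main.v *)
Require Import Defs.
From HB Require Import structures.
From mathcomp Require Import all_boot all_order all_algebra.
From mathcomp Require Import all_classical all_reals all_analysis.
From mathcomp Require Import zify ring lra.
Import Order.TTheory GRing.Theory Num.Theory.
Local Open Scope ring_scope.
Local Open Scope classical_set_scope.

Lemma pow_large (R : realType) (e C : R) : 0 < e ->
  exists N : nat, forall q : nat, (N < q)%N -> C <= q%:R `^ e.
Proof.
move=> e0; set r := Num.max 1 C.
exists (Num.trunc (r `^ e^-1)) => q hq.
have r1 : 1 <= r by rewrite le_max lexx.
have h1 : r `^ e^-1 <= q%:R.
  apply: ltW; apply: lt_le_trans (truncnS_gt _) _; rewrite ler_nat; exact: hq.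
apply: (le_trans (_ : C <= r)); first by rewrite le_max lexx orbT.
have -> : r = (r `^ e^-1) `^ e.
  by rewrite -powRrM mulVf ?gt_eqF // powRr1 // (le_trans ler01 r1).
apply: ge0_ler_powR => //; first exact: ltW.
  by rewrite nnegrE powR_ge0.
by rewrite nnegrE.
Qed.

Lemma transfer T (A B S : set T) (f g : T -> T) : finite_set (A `&` S) ->
  (forall a, A a -> ~ S a -> B (f a) /\ g (f a) = a) ->
  infinite_set A -> infinite_set B.
Proof.
move=> fS H iA fB; apply: iA.
apply: (sub_finite_set (B := A `&` S `|` g @` B)); last first.
  by rewrite finite_setU; split => //; apply: finite_image.
move=> a Aa; case: (pselect (S a)) => Sa; [left|right] => //.
have [Bf gf] := H a Aa Sa; by exists (f a).
Qed.

Lemma sup_le (R : realType) (A B : set R) :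
  (forall t, A t -> forall e, 0 < e -> B (t - e)) ->
  (ereal_sup [set t%:E | t in A] <= ereal_sup [set t%:E | t in B])%E.
Proof.
move=> H; apply: ge_ereal_sup => _ [t At <-].
apply/lee_addgt0Pr => e e0.
have : ((t - e)%:E <= ereal_sup [set t%:E | t in B])%E.
  by apply: ereal_sup_ubound; exists (t - e) => //; apply: H.
case: (ereal_sup _) => [r||] h //=; last by rewrite leey.
by rewrite -EFinD lee_fin -lerBlDr -lee_fin.
Qed.

Lemma ineq (R : realType) (a C C' Q t e : R) : 0 < Q -> C' <= C -> C <= Q `^ e ->
  a < C' * Q `^ (- t) -> a < Q `^ (- (t - e)).
Proof.
move=> Q0 CC CQ h.
rewrite opprB addrC powRD; last by apply/implyP => _; rewrite gt_eqF.
apply: (lt_le_trans h); rewrite [X in _ <= X]mulrC ler_wpM2r //; first exact: powR_ge0.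
exact: le_trans CQ.
Qed.

Lemma small_finite (R : realType) P (y t : R) N :
  finite_set (approx_set P y t `&` [set pq | (pq.2 <= N)%N]).
Proof.
set B := N%:R * (`|y| + 1 + N%:R `^ (- t)).
set M := Num.trunc B.
set S := [set n : nat | (n <= M)%N].
have fS : finite_set S.
  apply: (sub_finite_set (B := [set` iota 0 M.+1])); last exact: finite_seq.
  move=> n; rewrite /S /= => h; have := mem_iota 0 M.+1 n; rewrite add0n ltnS h /=; exact.
apply: (sub_finite_set (B := (Posz @` S `|` (fun n : nat => - (n%:Z)) @` S)
                              `*` [set q : nat | (q <= N)%N])); last first.
  apply: finite_setX; last first.
    apply: (sub_finite_set (B := [set` iota 0 N.+1])); last exact: finite_seq.
    move=> n /= h; have := mem_iota 0 N.+1 n; rewrite add0n ltnS h /=; exact.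
  by rewrite finite_setU; split; apply: finite_image.
move=> [p q] [[/= q0 [_ [_ hlt]]] qN]; split => //=.
set z : R := p%:~R / q%:R.
have qR0 : 0 < q%:R :> R by rewrite ltr0n.
have hz : `|z| <= `|y| + q%:R `^ (- t).
  have := ltW hlt; rewrite ler_distl => /andP[h1 h2].
  have := lexx `|y|; rewrite ler_norml => /andP[h3 h4].
  rewrite /z ler_norml; apply/andP; split; lra.
have hq : q%:R `^ (- t) <= 1 + N%:R `^ (- t).
  case: (leP 0 (- t)) => ht.
    apply: (le_trans _ (_ : N%:R `^ (-t) <= _)); last by rewrite lerDr.
    apply: ge0_ler_powR => //; rewrite ?nnegrE ?ler0n ?ler_nat //.
  apply: (le_trans _ (_ : 1 <= _)); last by rewrite lerDl powR_ge0.
  rewrite -[X in _ <= X](powRr0 q%:R); apply: ler_powR; first by rewrite ler1n.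
  exact: ltW.
have hp : `|p%:~R : R| <= B.
  have -> : p%:~R = z * q%:R :> R by rewrite /z divfK // gt_eqF.
  rewrite normrM (ger0_norm (ltW qR0)) /B mulrC.
  apply: ler_pM; rewrite ?normr_ge0 ?ler0n ?ler_nat //.
  lra.
have hpM : (`|p| <= M)%N.
  rewrite /M truncn_ge_nat; last by apply: le_trans hp; exact: normr_ge0.
  by rewrite natr_absz intr_norm.
case: p hpM {hlt z hz hp} => n hn.
  by left; exists n.
by right; exists n.+1 => //; rewrite NegzE.
Qed.
Definition fGT (pq : int * nat) : int * nat :=
  if odd pq.2 then (pq.1 * 2, pq.2) else (pq.1, (pq.2 %/ 2)%N).
Definition fTG (rs : int * nat) : int * nat :=
  if odd rs.2 then ((rs.1 %/ 2)%Z, rs.2) else (rs.1, (rs.2 * 2)%N).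

Lemma GT (R : realType) (x t e : R) : 0 < e ->
  infinite_set (approx_set gammaR_cond x t) ->
  infinite_set (approx_set tauR_cond (2 * x) (t - e)).
Proof.
move=> e0.
have [N HN] := @pow_large R e (2 * 2 `^ (- t) + 2) e0.
apply: (@transfer _ _ _ [set pq | (pq.2 <= N.*2.+1)%N] fGT fTG).
  exact: small_finite.
move=> [p q] [/= q0 [cop [cond hlt]]] /negP; rewrite -ltnNge => Nq.
have C0 : 0 <= 2 `^ (- t) :> R by exact: powR_ge0.
rewrite /fGT /=; case: ifP => oq.
  split; last by rewrite /fTG /= oq mulzK.
  split => //=; split.
    by rewrite abszM coprimeMl coprime2n oq andbT.
  split; first by rewrite /tauR_cond abszM oddM /= andbF.
  apply: (@ineq R _ (2 * 2 `^ (- t) + 2) (2)).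
  - by rewrite ltr0n.
  - by rewrite lerDr mulr_ge0.
  - apply: HN; lia.
  have -> : 2 * x - (p * 2)%:~R / q%:R = 2 * (x - p%:~R / q%:R).
    by rewrite intrM; ring.
  by rewrite normrM ger0_norm // ltr_pM2l.
have [q' def] : exists q', q = (q' * 2)%N.
  by exists (q %/ 2)%N; rewrite divnK // dvdn2 oq.
subst q.
have oq' : odd q' = false.
  move: cond; rewrite /gammaR_cond; lia.
rewrite mulnK //.
split; last by rewrite /fTG /= oq'.
split => /=; first lia.
split; first by apply: coprime_dvdr cop; rewrite dvdn_mulr.
split; first by rewrite /tauR_cond oq' andbF.
apply: (@ineq R _ (2 * 2 `^ (- t) + 2) (2 * 2 `^ (- t))).
- rewrite ltr0n; lia.
- by rewrite lerDl.
- apply: HN; lia.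
have -> : 2 * x - p%:~R / q'%:R = 2 * (x - p%:~R / (q' * 2)%N%:R).
  have q'0 : q'%:R != 0 :> R by rewrite pnatr_eq0; lia.
  rewrite natrM; field => //.
rewrite normrM ger0_norm // -mulrA ltr_pM2l // mulrC -powRM ?ler0n //.
by rewrite -natrM [_^-1 * _]mulrC [(2 * q')%N]mulnC.
Qed.

Lemma TG (R : realType) (x t e : R) : 0 < e ->
  infinite_set (approx_set tauR_cond (2 * x) t) ->
  infinite_set (approx_set gammaR_cond x (t - e)).
Proof.
move=> e0.
have [N HN] := @pow_large R e (2 `^ t + 1) e0.
apply: (@transfer _ _ _ [set pq | (pq.2 <= N)%N] fTG fGT).
  exact: small_finite.
move=> [r s] [/= s0 [cop [cond hlt]]] /negP; rewrite -ltnNge => Ns.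
have C0 : 0 < 2 `^ t :> R by apply: powR_gt0.
have s0' : s%:R != 0 :> R by rewrite pnatr_eq0; lia.
rewrite /fTG /=; case: ifP => os.
  have [r' def] : exists r', r = r' * 2.
    by exists (r %/ 2)%Z; rewrite divzK // dvdzE /= dvdn2; move: cond; rewrite /tauR_cond /= os; by case: (odd _).
  subst r; rewrite mulzK //.
  split; last by rewrite /fGT /= os.
  split => //=; split.
    by move: cop; rewrite abszM coprimeMl => /andP[].
  split; first by rewrite /gammaR_cond; lia.
  apply: (@ineq R _ (2 `^ t + 1) (2^-1)).
  - by rewrite ltr0n.
  - apply: (le_trans _ (_ : 1 <= _)); last by rewrite lerDr ltW.
    by rewrite invf_le1 ?ler1n.
  - apply: HN; lia.
  have -> : x - r'%:~R / s%:R = 2^-1 * (2 * x - (r' * 2)%:~R / s%:R).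
    by rewrite intrM; field.
  by rewrite normrM ger0_norm // ltr_pM2l.
have ro : odd `|r|.
  have s2 : (2 %| s)%N by rewrite dvdn2 os.
  by move: cop; rewrite -(divnK s2) coprimeMr coprimen2 => /andP[].
split; last by rewrite /fGT /= oddM andbF mulnK.
split => /=; first lia.
split.
  by rewrite coprimeMr coprimen2 ro cop.
split; first by rewrite /gammaR_cond; lia.
apply: (@ineq R _ (2 `^ t + 1) (2 `^ t * 2^-1)).
- by rewrite ltr0n; lia.
- apply: (le_trans _ (_ : 2 `^ t <= _)); last by rewrite lerDl.
  by rewrite ler_piMr ?(ltW C0) // invf_le1 ?ler1n.
- apply: HN; lia.
have -> : x - r%:~R / (s * 2)%:R = 2^-1 * (2 * x - r%:~R / s%:R).
  by rewrite natrM; field.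
have -> : 2 `^ t * 2^-1 * (s * 2)%:R `^ (- t) = 2^-1 * s%:R `^ (- t) :> R.
  have C1 : 2 `^ t != 0 :> R by rewrite gt_eqF.
  by rewrite natrM powRM ?ler0n // [2 `^ (- t)]powRN; field.
by rewrite normrM ger0_norm // ltr_pM2l.
Qed.

Theorem lemma3p3 (R : realType) (x : R) (hx : irrational x) :
  gamma_R x = tau_R (2 * x).
Proof.
apply/eqP; rewrite eq_le; apply/andP; split.
  apply: sup_le => t ht e e0; exact: GT.
apply: sup_le => t ht e e0; exact: TG.
Qed.
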